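(* Let $\mathcal{X}$ be a compact metric space, let $\Theta$ be a compact metric space, and let $f_\theta:\mathcal{X}\to\mathbb{R}^p$, $\theta\in\Theta$, be a family of functions such that (i) for each $\theta\in\Theta$ the image $f_\theta(\mathcal{X})$ spans $\mathbb{R}^p$, and (ii) the map $(x,\theta)\mapsto f_\theta(x)$ is continuous on $\mathcal{X}\times\Theta$. Then there exist $n_{\rm st}\in\mathbb{N}$ and points $x_1,\ldots,x_{n_{\rm st}}\in\mathcal{X}$ such that for every $\theta\in\Theta$ the vectors $f_\theta(x_1),\ldots,f_\theta(x_{n_{\rm st}})$ span $\mathbb{R}^p$. Hence, for such points, the design $\xi_{n_{\rm st}}=\frac{1}{n_{\rm st}}\sum_{i=1}^{n_{\rm st}}\delta_{x_i}$ has positive definite information matrix $M(\xi_{n_{\rm st}},\theta)$ for all $\theta\in\Theta$.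
   Context: A design $\xi$ is a probability measure on $\mathcal{X}$ with finite support; $\delta_x$ is the point mass at $x$. The information matrix of a design $\xi$ at $\theta\in\Theta$ is $M(\xi,\theta)=\sum_{x\in\mathrm{supp}(\xi)}\xi(x)\,f_\theta(x)f_\theta^{\mathsf T}(x)$. *)

(* Defs.v *)
From HB Require Import structures.
From mathcomp Require Import all_boot all_order all_algebra.
From mathcomp Require Import all_classical all_reals all_analysis.
Set Implicit Arguments. Unset Strict Implicit. Unset Printing Implicit Defensive.
Import Order.TTheory GRing.Theory Num.Theory.
Import numFieldNormedType.Exports.
Local Open Scope ring_scope.
Local Open Scope classical_set_scope.

Definition spans (R : realType) (p : nat) (S : set 'cV[R]_p) : Prop :=
  forall v : 'cV[R]_p, exists (n : nat) (w : 'I_n -> 'cV[R]_p) (c : 'I_n -> R),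
    (forall i, S (w i)) /\ v = \sum_(i < n) c i *: w i.

(* Information matrix of a finitely supported design with mass function [xi]
   and support list [supp] (duplicates removed):
   M(xi,theta) = sum_{x in supp} xi(x) f_theta(x) f_theta(x)^T. *)
Definition infomat (R : realType) (X Theta : choiceType) (p : nat)
  (f : Theta -> X -> 'cV[R]_p) (xi : X -> R) (supp : seq X) (th : Theta)
  : 'M[R]_p :=
  \sum_(x <- undup supp) xi x *: (f th x *m (f th x)^T).

(* The design xi_n = (1/n) sum_i delta_{x_i}: its mass function and support. *)
Definition unif_design_mass (R : realType) (X : choiceType) (n : nat)
  (xs : 'I_n -> X) (x : X) : R :=
  (\sum_(i < n) (xs i == x)%:R) / n%:R.

Definition unif_design_supp (X : choiceType) (n : nat) (xs : 'I_n -> X)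
  : seq X := [seq xs i | i <- enum 'I_n].

Definition posdef (R : realType) (p : nat) (A : 'M[R]_p) : Prop :=
  A^T = A /\ forall v : 'cV[R]_p, v != 0 -> 0 < (v^T *m A *m v) ord0 ord0.

(* Main.v *)
Require Import Defs.
From HB Require Import structures.
From mathcomp Require Import all_boot all_order all_algebra.
From mathcomp Require Import all_classical all_reals all_analysis.
From mathcomp Require Import fingroup perm.
From mathcomp Require Import lra.
Import Order.TTheory GRing.Theory Num.Theory.
Import numFieldNormedType.Exports.
Local Open Scope ring_scope.
Local Open Scope classical_set_scope.
Set Implicit Arguments. Unset Strict Implicit. Unset Printing Implicit Defensive.

Definition inspan (R : realType) (p : nat) (S : set 'cV[R]_p) (v : 'cV[R]_p) :=
  exists (n : nat) (w : 'I_n -> 'cV[R]_p) (c : 'I_n -> R),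
    (forall i, S (w i)) /\ v = \sum_(i < n) c i *: w i.

Lemma inspan0 (R : realType) p (S : set 'cV[R]_p) : inspan S 0.
Proof. by exists 0%N, (fun _ => 0), (fun _ => 0); split => [[]//|]; rewrite big_ord0. Qed.

Lemma inspan_mem (R : realType) p (S : set 'cV[R]_p) v : S v -> inspan S v.
Proof.
by move=> Sv; exists 1%N, (fun _ => v), (fun _ => 1); split => //; rewrite big_ord1 scale1r.
Qed.

Lemma inspanZ (R : realType) p (S : set 'cV[R]_p) a v : inspan S v -> inspan S (a *: v).
Proof.
move=> [n [w [c [Sw ->]]]]; exists n, w, (fun i => a * c i); split => //.
by rewrite scaler_sumr; apply: eq_bigr => i _; rewrite scalerA.
Qed.

Lemma inspanD (R : realType) p (S : set 'cV[R]_p) u v :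
  inspan S u -> inspan S v -> inspan S (u + v).
Proof.
move=> [n1 [w1 [c1 [Sw1 ->]]]] [n2 [w2 [c2 [Sw2 ->]]]].
exists (n1 + n2)%N, (fun i => match fintype.split i with inl a => w1 a | inr b => w2 b end),
  (fun i => match fintype.split i with inl a => c1 a | inr b => c2 b end).
split.
  by move=> i; case: (fintype.split i).
rewrite big_split_ord /=; congr (_ + _); apply: eq_bigr => i _.
  by have /= -> := unsplitK (inl i : 'I_n1 + 'I_n2).
by have /= -> := unsplitK (inr i : 'I_n1 + 'I_n2).
Qed.

Lemma inspan_sum (R : realType) p (S : set 'cV[R]_p) (I : Type) (r : seq I)
  (P : pred I) (F : I -> 'cV[R]_p) :
  (forall i, P i -> inspan S (F i)) -> inspan S (\sum_(i <- r | P i) F i).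
Proof.
move=> h; apply: (big_ind (inspan S)); [exact: inspan0| exact: inspanD| exact: h].
Qed.

Lemma inspan_sub (R : realType) p (S T : set 'cV[R]_p) v :
  S `<=` T -> inspan S v -> inspan T v.
Proof. by move=> ST [n [w [c [Sw e]]]]; exists n, w, c; split => // i; apply: ST. Qed.

Lemma cvg_sumseq (R : realType) (T : Type) (F : set_system T) (FF : Filter F)
  (I : Type) (r : seq I) (G : I -> T -> R) (a : I -> R) :
  (forall i, G i x @[x --> F] --> a i) ->
  \sum_(i <- r) G i x @[x --> F] --> \sum_(i <- r) a i.
Proof.
move=> h; elim: r => [|i r ih].
  have -> : (fun x => \sum_(i <- [::]) G i x) = fun _ => 0.
    by apply/funext => x; rewrite big_nil.
  by rewrite big_nil; exact: cvg_cst.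
have -> : (fun x => \sum_(j <- i :: r) G j x) = (G i + fun x => \sum_(j <- r) G j x).
  by apply/funext => x; rewrite big_cons.
by rewrite big_cons; apply: cvgD.
Qed.

Lemma cvg_prodseq (R : realType) (T : Type) (F : set_system T) (FF : Filter F)
  (I : Type) (r : seq I) (G : I -> T -> R) (a : I -> R) :
  (forall i, G i x @[x --> F] --> a i) ->
  \prod_(i <- r) G i x @[x --> F] --> \prod_(i <- r) a i.
Proof.
move=> h; elim: r => [|i r ih].
  have -> : (fun x => \prod_(i <- [::]) G i x) = fun _ => 1.
    by apply/funext => x; rewrite big_nil.
  by rewrite big_nil; exact: cvg_cst.
have -> : (fun x => \prod_(j <- i :: r) G j x) = (G i \* fun x => \prod_(j <- r) G j x).
  by apply/funext => x; rewrite big_cons.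
by rewrite big_cons; apply: cvgM.
Qed.

Lemma entry_cont (R : realType) m n (i : 'I_m) (j : 'I_n) :
  continuous (fun M : 'M[R]_(m, n) => M i j).
Proof.
move=> u A /nbhs_ballP[e /= e0 eA].
apply/nbhs_ballP; exists e => //= v [_ uv]; apply: eA.
exact: uv.
Qed.
Lemma local_span (R : realType) (X Theta : pseudoMetricType R) (p : nat)
  (f : Theta -> X -> 'cV[R]_p)
  (hspan : forall th : Theta, spans (range (f th)))
  (hcont : continuous (fun z : X * Theta => f z.2 z.1)) (th0 : Theta) :
  exists s : seq X, \forall th \near th0,
    forall v, inspan [set f th y | y in [set y | y \in s]] v.
Proof.
have cf : forall x j, (fun th => f th x j 0) @ th0 --> f th0 x j 0.
  move=> x j.
  apply: (continuous_comp (f := fun th => f th x) (g := fun M : 'cV[R]_p => M j 0)); last exact: entry_cont.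
  apply: (continuous_comp (f := fun th => (x, th)) (g := fun z : X * Theta => f z.2 z.1)); last exact: hcont.
  by apply: cvg_pair; [exact: cvg_cst| exact: cvg_id].
pose U := {n : nat & (('I_n -> X) * ('I_n -> R))%type}.
have hk : forall k : 'I_p, exists u : U,
    delta_mx k 0 = \sum_(i < projT1 u) (projT2 u).2 i *: f th0 ((projT2 u).1 i).
  move=> k; have [n [w [c [hw e]]]] := hspan th0 (delta_mx k 0).
  have hw' : forall i, exists y, f th0 y = w i by move=> i; have [y _ <-] := hw i; exists y.
  have [y hy] := boolp.choice hw'.
  exists (existT _ n (y, c)); rewrite e /=; apply: eq_bigr => i _; by rewrite hy.
have [g hg] := boolp.choice hk.
pose nk k := projT1 (g k).
pose yk k : 'I_(nk k) -> X := (projT2 (g k)).1.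
pose ck k : 'I_(nk k) -> R := (projT2 (g k)).2.
pose A th : 'M[R]_p := \matrix_(j, k) (\sum_(i < nk k) ck k i * f th (yk k i) j 0).
have A0 : A th0 = 1%:M.
  apply/matrixP => j k; have := congr1 (fun M : 'cV[R]_p => M j 0) (hg k).
  rewrite /= !mxE summxE => E.
  rewrite eqxx andbT in E; rewrite E; apply: eq_bigr => i _; by rewrite mxE.
have cA : (fun th => \det (A th)) @ th0 --> \det (A th0).
  apply: cvg_sumseq => s0; pose s : 'S_p := s0; apply: cvgM; first exact: cvg_cst.
  apply: cvg_prodseq => i.
  have -> : (fun th => A th i (s i)) =
     (fun th => \sum_(l < nk (s i)) ck (s i) l * f th (yk (s i) l) i 0).
    by apply/funext => th; rewrite mxE.
  rewrite mxE; apply: cvg_sumseq => l; apply: cvgM; [exact: cvg_cst| exact: cf].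
have nz : \forall th \near th0, \det (A th) != 0.
  by apply: (cvgr_neq0 _ cA); rewrite A0 det1 oner_neq0.
exists [seq yk k i | k <- enum 'I_p, i <- enum 'I_(nk k)].
near=> th => v.
have Au : A th \in unitmx by rewrite unitmxE unitfE; near: th.
pose u := invmx (A th) *m v.
have vE : v = \sum_k u k 0 *: \sum_(i < nk k) ck k i *: f th (yk k i).
  have {1}-> : v = A th *m u by rewrite /u mulmxA mulmxV // mul1mx.
  apply/matrixP => j l; rewrite !mxE summxE; apply: eq_bigr => k _.
  rewrite !mxE summxE (ord1 l) mulrC; congr (_ * _).
  by apply: eq_bigr => i _; rewrite !mxE.
rewrite vE; apply: inspan_sum => k _; apply: inspanZ.
apply: inspan_sum => i _; apply: inspanZ; apply: inspan_mem.
exists (yk k i) => //=.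
by apply: (allpairs_f_dep yk); rewrite mem_enum.
Unshelve. all: end_near.
Qed.

Lemma global_span (R : realType) (X Theta : pseudoMetricType R)
  (cTh : compact [set: Theta]) (p : nat)
  (f : Theta -> X -> 'cV[R]_p)
  (hspan : forall th : Theta, spans (range (f th)))
  (hcont : continuous (fun z : X * Theta => f z.2 z.1)) :
  exists s : seq X, forall th v, inspan [set f th y | y in [set y | y \in s]] v.
Proof.
pose F := filter_from [set: seq X] (fun s => [set t : seq X | {subset s <= t}]).
have FF : Filter F.
  apply: filter_fromT_filter; first by exists [::].
  move=> s1 s2; exists (s1 ++ s2) => t /= h; split => x xs; apply: h;
    by rewrite mem_cat xs ?orbT.
have := (proj1 (compact_near_coveringP [set: Theta]) cTh) (seq X) F
  (fun t th => forall v, inspan [set f th y | y in [set y | y \in t]] v) FF.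
case.
  move=> th0 _; have [s0 hs0] := local_span hspan hcont th0.
  exists ([set th | forall v, inspan [set f th y | y in [set y | y \in s0]] v],
          [set t : seq X | {subset s0 <= t}]).
    by split => //; exists s0.
  case=> th t /= [h1 h2] v; apply: inspan_sub (h1 v).
  by move=> w [y ys <-]; exists y => //; apply: h2.
move=> s _ hs; exists s => th v; exact: (hs s (fun x xs => xs) th I v).
Qed.

Lemma posdef_of_span (R : realType) (X Theta : choiceType) p
  (f : Theta -> X -> 'cV[R]_p) n (xs : 'I_n -> X) th :
  spans [set f th (xs i) | i in [set: 'I_n]] ->
  posdef (infomat f (unif_design_mass R xs) (unif_design_supp xs) th).
Proof.
move=> hsp; split.
  rewrite /infomat; apply/matrixP => i j; rewrite !mxE !summxE.
  apply: eq_bigr => x _; rewrite !mxE; congr (_ * _).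
  by apply: eq_bigr => k _; rewrite !mxE mulrC.
move=> v v0.
set a := unif_design_mass R xs.
have E : (v^T *m infomat f a (unif_design_supp xs) th *m v) 0 0 =
    \sum_(x <- undup (unif_design_supp xs)) a x * ((v^T *m f th x) 0 0) ^+ 2.
  rewrite /infomat mulmx_sumr mulmx_suml summxE; apply: eq_bigr => x _.
  rewrite -scalemxAr -scalemxAl mxE; congr (_ * _).
  rewrite !mulmxA -[v^T *m f th x *m _ *m v]mulmxA [in LHS]mxE big_ord1 expr2; congr (_ * _).
  by rewrite -[(f th x)^T *m v]trmxK trmx_mul trmxK mxE.
have [i0 hi0] : exists i0, (v^T *m f th (xs i0)) 0 0 != 0.
  apply/not_existsP => /= hall.
  have h0 : forall i, (v^T *m f th (xs i)) 0 0 = 0.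
    by move=> i; apply/eqP; apply: contrapT => /negP; apply: hall.
  have [j vj] : exists j, v j 0 != 0.
    apply/not_existsP => /= hz; move/eqP: v0; apply; apply/matrixP => j l.
    rewrite (ord1 l) mxE; apply/eqP; apply: contrapT => /negP; apply: hz.
  have [m [w [c [hw e]]]] := hsp v.
  have vv0 : (v^T *m v) 0 0 = 0.
    rewrite [X in v^T *m X]e mulmx_sumr summxE big1 // => l _.
    by rewrite -scalemxAr mxE; have [i _ <-] := hw l; rewrite h0 mulr0.
  have : 0 < (v^T *m v) 0 0.
    rewrite mxE (bigD1 j) //= mxE.
    have : 0 <= \sum_(i < p | i != j) v^T 0 i * v i 0.
      by apply: sumr_ge0 => i _; rewrite mxE -expr2 sqr_ge0.
    have : 0 < v j 0 * v j 0 by rewrite -expr2 exprn_even_gt0.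
    lra.
  by rewrite vv0 ltxx.
have a_ge0 : forall x, 0 <= a x.
  by move=> x; rewrite /a /unif_design_mass divr_ge0 // sumr_ge0 // => i _; rewrite ler0n.
have a_gt0 : 0 < a (xs i0).
  rewrite /a /unif_design_mass divr_gt0 //; last by rewrite ltr0n; case: n xs i0 {hi0 a a_ge0 E hsp} => [? []|].
  rewrite (bigD1 i0) //= eqxx /=.
  have : 0 <= \sum_(i < n | i != i0) ((xs i == xs i0)%:R : R).
    by apply: sumr_ge0 => i _; rewrite ler0n.
  lra.
rewrite E (bigD1_seq (xs i0)) //=; last exact: undup_uniq.
  have : 0 <= \sum_(i <- undup (unif_design_supp xs) | i != xs i0) a i * (v^T *m f th i) 0 0 ^+ 2.
    by apply: sumr_ge0 => x _; rewrite mulr_ge0 // sqr_ge0.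
  have : 0 < a (xs i0) * (v^T *m f th (xs i0)) 0 0 ^+ 2.
    by rewrite mulr_gt0 // exprn_even_gt0.
  lra.
by rewrite mem_undup; apply: map_f; rewrite mem_enum.
Qed.

Theorem lemma2p1 (R : realType) (X Theta : pseudoMetricType R)
  (hX : hausdorff_space X) (hTh : hausdorff_space Theta)
  (cX : compact [set: X]) (cTh : compact [set: Theta])
  (p : nat) (f : Theta -> X -> 'cV[R]_p)
  (hspan : forall th : Theta, spans (range (f th)))
  (hcont : continuous (fun z : X * Theta => f z.2 z.1)) :
  exists (n : nat) (xs : 'I_n -> X),
    forall th : Theta,
      spans [set f th (xs i) | i in [set: 'I_n]] /\
      posdef (infomat f (unif_design_mass R xs) (unif_design_supp xs) th).
Proof.
have [s hs] := global_span cTh hspan hcont.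
exists (size s), (tnth (in_tuple s)) => th.
have sp : spans [set f th (tnth (in_tuple s) i) | i in [set: 'I_(size s)]].
  move=> v; apply: inspan_sub (hs th v) => w [y ys <-].
  have ys' : (index y s < size s)%N by rewrite index_mem.
  exists (Ordinal ys') => //.
  by rewrite (tnth_nth y) /= nth_index.
by split => //; exact: posdef_of_span.
Qed.
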